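(* Let $\mathcal P$ be a pre-Hahn-localizable family of probability measures on $(\Omega,\mathcal F)$ with localization $\mathcal Q$ whose supports $\{S_Q\}$ are pairwise disjoint, and let $\mathcal H=\mathcal H_{\mathcal F}^{\mathcal Q}$ be its Hahn-extension. Then for every $\mu\in\mathrm{ca}(\mathcal P)$ the set $\mathcal Q(\mu)$ is at most countable, the formula $\mu^{\mathcal Q}(A)=\sum_{Q\in\mathcal Q(\mu)}\mu(A\cap S_Q)$, $A\in\mathcal H$, defines a finite signed measure on $\mathcal H$ extending $\mu$, and $|\mu^{\mathcal Q}|=|\mu|^{\mathcal Q}$.
   Context: $\mathrm{ca}(\mathcal P)$ is the set of finite signed measures $\mu$ on $\mathcal F$ with $|\mu|\ll P$ for some $P\in\mathcal P$; $|\mu|$ is the total variation measure. $\mathcal P\lll\mathcal Q$ means each $P\in\mathcal P$ is absolutely continuous w.r.t. some $Q\in\mathcal Q$; $\mathrm{sconv}(\mathcal Q)$ denotes countable convex combinations. $\mathcal P$ is pre-Hahn-localizable with localization $\mathcal Q$ and supports $S_Q\in\mathcal F$ if $Q(S_R)=\delta_{QR}$ for $Q,R\in\mathcal Q$ and $\mathcal Q\lll\mathcal P\lll\mathrm{sconv}(\mathcal Q)$. Hahn-extension: $\mathcal H_{\mathcal F}^{\mathcal Q}=\sigma\big(\mathcal F\cup\{\bigcup_{Q\in\mathcal Q}E_Q:E_Q\in\mathcal F,E_Q\subseteq S_Q\}\big)$. $\mathcal Q(\mu)=\{Q\in\mathcal Q:|\mu|(S_Q)>0\}$; since $\mathcal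 Q(|\mu|)=\mathcal Q(\mu)$, $|\mu|^{\mathcal Q}(A)=\sum_{Q\in\mathcal Q(\mu)}|\mu|(A\cap S_Q)$. *)

(* Defs.v *)
(* Two sigma-algebras on one
   carrier Omega (F and its Hahn-extension H) are handled as explicit set
   systems (predicates on sets) rather than as a measurableType instance. *)
From HB Require Import structures.
From mathcomp Require Import all_boot all_order all_algebra.
From mathcomp Require Import all_classical all_reals all_analysis.
Set Implicit Arguments. Unset Strict Implicit. Unset Printing Implicit Defensive.
Import Order.TTheory GRing.Theory Num.Theory.
Import numFieldNormedType.Exports.
Local Open Scope classical_set_scope.
Local Open Scope ring_scope.

Section defs.
Variables (R : realType) (Omega : Type).
Implicit Types (F : set (set Omega)) (mu P Q : set Omega -> R).

Definition is_sigma_algebra F := sigma_algebra setT F.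

Definition is_signed_measure F mu :=
  mu set0 = 0 /\
  forall B : nat -> set Omega, (forall i, F (B i)) -> trivIset setT B ->
    (fun n => \sum_(i < n) mu (B i)) @ \oo --> mu (\bigcup_i B i).

Definition is_probability F P :=
  [/\ is_signed_measure F P, (forall A, F A -> 0 <= P A) & P setT = 1].

Definition tot_var F mu (A : set Omega) : \bar R :=
  ereal_sup [set x | exists (n : nat) (B : nat -> set Omega),
     [/\ (forall i, F (B i)), trivIset `I_n B, \bigcup_(i in `I_n) B i = A &
        x = ((\sum_(i < n) `|mu (B i)|)%:E)]].

Definition abs_cont F (nu : set Omega -> \bar R) P :=
  forall A, F A -> P A = 0 -> nu A = 0%E.

Definition abs_cont_r F (nu : set Omega -> R) P :=
  forall A, F A -> P A = 0 -> nu A = 0.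

Definition ca F (Pf : set (set Omega -> R)) : set (set Omega -> R) :=
  [set mu | is_signed_measure F mu /\
     exists2 P, Pf P & abs_cont F (tot_var F mu) P].

Definition llless F (Pf Qf : set (set Omega -> R)) :=
  forall P, Pf P -> exists2 Q, Qf Q & abs_cont_r F P Q.

Definition sconv F (Qf : set (set Omega -> R)) : set (set Omega -> R) :=
  [set nu | exists (c : nat -> R) (q : nat -> (set Omega -> R)),
     [/\ (forall n, Qf (q n)), (forall n, 0 <= c n),
         (fun n => \sum_(i < n) c i) @ \oo --> (1 : R) &
         forall A, F A -> (fun n => \sum_(i < n) c i * q i A) @ \oo --> nu A]].

Definition pre_hahn_localizable F (Pf Qf : set (set Omega -> R))
    (S : (set Omega -> R) -> set Omega) :=
  [/\ (forall Q, Qf Q -> is_probability F Q),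
      (forall Q, Qf Q -> F (S Q)),
      (forall Q Q', Qf Q -> Qf Q' -> Q (S Q') = if pselect (Q = Q') then 1 else 0),
      llless F Qf Pf & llless F Pf (sconv F Qf)].

Definition hahn_extension F (Qf : set (set Omega -> R))
    (S : (set Omega -> R) -> set Omega) : set (set Omega) :=
  smallest (sigma_algebra setT)
    (F `|` [set A | exists E : (set Omega -> R) -> set Omega,
              (forall Q, Qf Q -> F (E Q) /\ E Q `<=` S Q) /\
              A = \bigcup_(Q in Qf) E Q]).

Definition Qmu F (Qf : set (set Omega -> R)) (S : (set Omega -> R) -> set Omega) mu :=
  [set Q | Qf Q /\ (0 < tot_var F mu (S Q))%E].

Definition abs_summable (I : choiceType) (J : set I) (f : I -> R) :=
  (esum J (fun i => (`|f i|)%:E) < +oo)%E.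

Definition family_sum (I : choiceType) (J : set I) (f : I -> R) : R :=
  fine (esum J (fun i => (Num.max (f i) 0)%:E)) -
  fine (esum J (fun i => (Num.max (- f i) 0)%:E)).

End defs.

(* Main.v *)
Require Import Defs.
From HB Require Import structures.
From mathcomp Require Import all_boot all_order all_algebra.
From mathcomp Require Import all_classical all_reals all_analysis.
From mathcomp Require Import ring lra.
Import Order.TTheory GRing.Theory Num.Theory.
Import numFieldNormedType.Exports.
Local Open Scope classical_set_scope.
Local Open Scope ring_scope.
Set Implicit Arguments. Unset Strict Implicit. Unset Printing Implicit Defensive.
Definition OT (Omega : Type) (w : Omega) (F : set (set Omega))
  (HF : is_sigma_algebra F) : Type := Omega.

HB.instance Definition _ Omega w F HF := gen_eqMixin (@OT Omega w F HF).
HB.instance Definition _ Omega w F HF := gen_choiceMixin (@OT Omega w F HF).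
HB.instance Definition _ Omega w F HF := isPointed.Build (@OT Omega w F HF) w.

Section mk.
Variables (Omega : Type) (w : Omega) (F : set (set Omega)) (HF : is_sigma_algebra F).
Lemma OT_m0 : F set0. Proof. by case: HF. Qed.
Lemma OT_mC A : F A -> F (~` A).
Proof. by case: HF => _ h _ /h; rewrite setTD. Qed.
Lemma OT_mU (G : (set Omega)^nat) : (forall i, F (G i)) -> F (\bigcup_i G i).
Proof. by case: HF => _ _; apply. Qed.
End mk.

HB.instance Definition _ Omega w F HF :=
  @isMeasurable.Build default_measure_display (@OT Omega w F HF) F
    (OT_m0 HF) (@OT_mC _ _ HF) (@OT_mU _ _ HF).

Definition emu (R : realType) Omega w F (HF : is_sigma_algebra F)
  (mu : set Omega -> R) (Hmu : is_signed_measure F mu) : set (OT w HF) -> \bar R :=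
  fun A => (mu A)%:E.

Section chg.
Variables (R : realType) (Omega : Type) (w : Omega) (F : set (set Omega))
  (HF : is_sigma_algebra F) (mu : set Omega -> R) (Hmu : is_signed_measure F mu).

Lemma emu0 : (@emu R Omega w F HF mu Hmu) set0 = 0%E.
Proof. by rewrite /emu; case: Hmu => ->. Qed.
Lemma emu_fin A : measurable A -> (@emu R Omega w F HF mu Hmu) A \is a fin_num.
Proof. by []. Qed.
Lemma emu_sa : semi_sigma_additive ((@emu R Omega w F HF mu Hmu)).
Proof.
move=> B mB tB mU; rewrite /emu.
case: Hmu => _ /(_ B mB tB) h.
apply/cvg_EFin; first by apply: nearW => n; rewrite sumEFin.
apply: cvg_trans h; apply: near_eq_cvg; apply: nearW => n /=.
by rewrite sumEFin /= big_mkord.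
Qed.

HB.instance Definition _ := isCharge.Build _ _ _ (@emu R Omega w F HF mu Hmu)
  emu0 emu_fin emu_sa.

Lemma hahn_F : exists P N, [/\ F P, F N, P `|` N = setT, P `&` N = set0 &
  (forall D, F D -> D `<=` P -> 0 <= mu D) /\ (forall D, F D -> D `<=` N -> mu D <= 0)].
Proof.
have [P [N [[mP posP] [mN negN] PN1 PN0]]] := Hahn_decomposition (@emu R Omega w F HF mu Hmu).
exists P, N; split => //.
Qed.

End chg.
Section gen.
Variables (R : realType) (Omega : Type) (G : set (set Omega)) (HG : is_sigma_algebra G).

Lemma G0 : G set0. Proof. by case: HG. Qed.
Lemma GC A : G A -> G (~` A).
Proof. by case: HG => _ h _ /h; rewrite setTD. Qed.
Lemma GT : G setT. Proof. by rewrite -setC0; apply: GC; exact: G0. Qed.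
Lemma GUn (B : (set Omega)^nat) : (forall i, G (B i)) -> G (\bigcup_i B i).
Proof. by case: HG => _ _; apply. Qed.
Lemma GU A B : G A -> G B -> G (A `|` B).
Proof.
move=> hA hB; rewrite -bigcup2E; apply: GUn => -[|[|i]] //=; exact: G0.
Qed.
Lemma GI A B : G A -> G B -> G (A `&` B).
Proof. by move=> hA hB; rewrite -[A `&` B]setCK setCI; apply/GC/GU; apply: GC. Qed.
Lemma GD A B : G A -> G B -> G (A `\` B).
Proof. by move=> hA hB; apply: GI => //; apply: GC. Qed.

Variable m : set Omega -> R.
Hypothesis Hm : is_signed_measure G m.

Lemma m0 : m set0 = 0. Proof. by case: Hm. Qed.

Lemma m_fin_add n (B : nat -> set Omega) : (forall i, G (B i)) ->
  trivIset `I_n B -> \sum_(i < n) m (B i) = m (\bigcup_(i in `I_n) B i).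
Proof.
move=> GB tB.
pose B' i := if (i < n)%N then B i else set0.
have GB' i : G (B' i) by rewrite /B'; case: ifP => _; [exact: GB|exact: G0].
have tB' : trivIset setT B'.
  move=> i j _ _; rewrite /B'; case: ifP => hi; case: ifP => hj.
  + by apply: tB.
  + by rewrite setI0 => -[].
  + by rewrite set0I => -[].
  + by rewrite setI0 => -[].
case: Hm => _ /(_ B' GB' tB') h.
have -> : \bigcup_(i in `I_n) B i = \bigcup_i B' i.
  apply/seteqP; split => x.
    by move=> [i /= hi Bx]; exists i => //; rewrite /B' hi.
  by move=> [i _]; rewrite /B'; case: ifP => // hi Bx; exists i.
have h2 : (fun k => \sum_(i < k) m (B' i)) @ \oo --> \sum_(i < n) m (B i).
  apply: cvg_near_cst; near=> k.
  have kn : (n <= k)%N by near: k; exists n.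
  rewrite -(big_mkord xpredT (fun i => m (B' i))) (@big_cat_nat _ _ _ n 0 k _ _ (leq0n n) kn) /=.
  have -> : \sum_(n <= i < k) m (B' i) = 0.
    by rewrite big_nat_cond big1 // => i /andP[/andP[ni _] _]; rewrite /B' ltnNge ni /= m0.
  by rewrite addr0 big_mkord; apply: eq_bigr => i _; rewrite /B' ltn_ord.
exact: (cvg_unique _ h2 h).
Unshelve. all: by end_near.
Qed.

Lemma m_add2 A B : G A -> G B -> A `&` B = set0 -> m (A `|` B) = m A + m B.
Proof.
move=> hA hB AB.
pose C i := if i == 0%N then A else B.
have GC' : forall i, G (C i) by move=> i; rewrite /C; case: ifP.
have tC : trivIset `I_2 C.
  move=> i j /= hi hj; case: (i) (j) hi hj => [|[|i']] [|[|j']] //= _ _.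
  - by rewrite /C /= AB => -[].
  - by rewrite /C /= setIC AB => -[].
have h := @m_fin_add 2 C GC' tC.
rewrite big_ord_recr /= big_ord1 /C /= in h; rewrite h; congr m.
apply/seteqP; split => x.
  by case=> hx; [exists 0%N|exists 1%N].
by move=> [[|[|i]] //= _]; [left|right].
Qed.

Lemma m_split A C : G A -> G C -> m A = m (A `&` C) + m (A `\` C).
Proof.
move=> hA hC; rewrite -m_add2.
- by rewrite setUIDK.
- exact: GI.
- exact: GD.
- by apply/seteqP; split => x // [[_ Cx] [_ nCx]].
Qed.

Lemma TV_hahn A C1 C2 : G A -> G C1 -> G C2 -> C1 `&` C2 = set0 ->
  C1 `|` C2 = A ->
  (forall D, G D -> D `<=` C1 -> 0 <= m D) ->
  (forall D, G D -> D `<=` C2 -> m D <= 0) ->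
  tot_var G m A = (m C1 - m C2)%:E.
Proof.
move=> hA h1 h2 C12 CA pos neg.
apply/eqP; rewrite eq_le; apply/andP; split.
  apply: ub_ereal_sup => _ [n [B [GB tB UB ->]]]; rewrite lee_fin.
  have BA i : (i < n)%N -> B i `<=` A by move=> hi x Bx; rewrite -UB; exists i.
  have step i : (i < n)%N -> `|m (B i)| <= m (B i `&` C1) - m (B i `&` C2).
    move=> hi.
    have e : m (B i) = m (B i `&` C1) + m (B i `&` C2).
      rewrite (m_split (GB i) h1); congr (_ + _); congr (m _).
      apply/seteqP; split => x /=.
        move=> [Bx nC1]; split => //; have : A x by apply: BA hi _ Bx.
        by rewrite -CA => -[].
      move=> [Bx C2x]; split => // C1x.
      by have : (C1 `&` C2) x by []; rewrite C12.
    have p1 := pos _ (GI (GB i) h1) (@subIsetr _ _ _).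
    have p2 := neg _ (GI (GB i) h2) (@subIsetr _ _ _).
    rewrite e ler_norml; apply/andP; split; lra.
  apply: (@le_trans _ _ (\sum_(i < n) (m (B i `&` C1) - m (B i `&` C2)))).
    by apply: ler_sum => i _; apply: step.
  rewrite sumrB (@m_fin_add n (fun i => B i `&` C1)) ?(@m_fin_add n (fun i => B i `&` C2)).
  - rewrite -!setI_bigcupl UB.
    rewrite !setIidr // -CA; [exact: subsetUr|exact: subsetUl].
  - by move=> i; apply: GI.
  - by move=> i j hi hj [x [[Bi _] [Bj _]]]; apply: tB => //; exists x.
  - by move=> i; apply: GI.
  - by move=> i j hi hj [x [[Bi _] [Bj _]]]; apply: tB => //; exists x.
apply: ereal_sup_ubound; exists 2%N, (fun i => if i == 0%N then C1 else if i == 1%N then C2 else set0).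
split.
- by move=> [|[|i]] //=; exact: G0.
- move=> i j /= hi hj; case: (i) (j) hi hj => [|[|i']] [|[|j']] //= _ _.
  + by rewrite C12 => -[].
  + by rewrite setIC C12 => -[].
- rewrite -CA; apply/seteqP; split => x.
    by move=> [[|[|i]] //= _]; [left|right].
  by case=> hx; [exists 0%N|exists 1%N].
- rewrite big_ord_recr /= big_ord1 /=.
  have p1 := pos _ h1 (@subset_refl _ _).
  have p2 := neg _ h2 (@subset_refl _ _).
  by rewrite ger0_norm // ler0_norm.
Qed.

End gen.

Section sums.
Variable R : realType.

Lemma fin_num_lty (x : \bar R) : x \is a fin_num -> (x < +oo)%E.
Proof. by rewrite ltey_eq => ->. Qed.

Lemma series_fine (e : nat -> \bar R) l : (forall i, (0 <= e i)%E) ->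
  (forall i, e i \is a fin_num) -> (\sum_(i <oo) e i)%E = l -> l \is a fin_num ->
  (fun n => \sum_(i < n) fine (e i)) @ \oo --> fine l.
Proof.
move=> e0 efin el lfin.
have hc : cvgn (fun n => (\sum_(0 <= i < n) e i)%E).
  by apply: is_cvg_nneseries => n _ _; apply: e0.
have h : (fun n => (\sum_(0 <= i < n) e i)%E) @ \oo --> (fine l)%:E.
  by rewrite fineK // -el; exact: hc.
apply: (cvg_trans _ (fine_cvg h)); apply: near_eq_cvg; apply: nearW => n /=.
by rewrite -sum_fine // big_mkord.
Qed.

Lemma FS_split (I : choiceType) (J : set I) (f f1 f2 : I -> R) :
  (forall i, J i -> 0 <= f1 i) -> (forall i, J i -> 0 <= f2 i) ->
  (forall i, J i -> f i = f1 i - f2 i) ->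
  esum J (fun i => (f1 i)%:E) \is a fin_num -> esum J (fun i => (f2 i)%:E) \is a fin_num ->
  abs_summable J f /\
  family_sum J f = fine (esum J (fun i => (f1 i)%:E)) - fine (esum J (fun i => (f2 i)%:E)).
Proof.
move=> f10 f20 ef E1 E2; split.
  rewrite /abs_summable.
  apply: (@le_lt_trans _ _ (esum J (fun i => (f1 i)%:E + (f2 i)%:E)%E)).
    apply: le_esum => i Ji; rewrite -EFinD lee_fin ef //.
    by rewrite (le_trans (ler_normB _ _)) // !ger0_norm //; [apply: f20|apply: f10].
  rewrite esumD; last 2 first.
  - by move=> i Ji; rewrite lee_fin; apply: f10.
  - by move=> i Ji; rewrite lee_fin; apply: f20.
  by apply: fin_num_lty; rewrite fin_numD E1 E2.
rewrite /family_sum.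
set Pp := esum J _; set Nn := esum J _.
have Pp0 : (0 <= Pp)%E by apply: esum_ge0 => i _; rewrite lee_fin le_max lexx orbT.
have Nn0 : (0 <= Nn)%E by apply: esum_ge0 => i _; rewrite lee_fin le_max lexx orbT.
have Ppf : Pp \is a fin_num.
  rewrite ge0_fin_numE //; apply: (le_lt_trans _ (fin_num_lty E1)).
  apply: le_esum => i Ji; rewrite lee_fin ge_max f10 // andbT ef //.
  by rewrite lerBlDr lerDl f20.
have Nnf : Nn \is a fin_num.
  rewrite ge0_fin_numE //; apply: (le_lt_trans _ (fin_num_lty E2)).
  apply: le_esum => i Ji; rewrite lee_fin ge_max f20 // andbT ef //.
  by rewrite opprB lerBlDr lerDl f10.
have eq : (Pp + esum J (fun i => (f2 i)%:E) = Nn + esum J (fun i => (f1 i)%:E))%E.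
  rewrite /Pp /Nn -!esumD; last 4 first.
  - by move=> i _; rewrite lee_fin le_max lexx orbT.
  - by move=> i Ji; rewrite lee_fin; apply: f10.
  - by move=> i _; rewrite lee_fin le_max lexx orbT.
  - by move=> i Ji; rewrite lee_fin; apply: f20.
  apply: eq_esum => i Ji; rewrite -!EFinD; congr (_%:E).
  have := ef i Ji; have := f10 i Ji; have := f20 i Ji.
  case: (leP 0 (f i)) => h.
    rewrite ?(max_l h) (max_r (_ : - f i <= 0)); last by rewrite oppr_le0.
    lra.
  rewrite ?(max_r (ltW h)) (max_l (_ : 0 <= - f i)); last by rewrite oppr_ge0 ltW.
  lra.
have e2 := congr1 fine eq.
rewrite !fineD // in e2; lra.
Qed.

End sums.

Section main.
Variables (R : realType) (Omega : Type) (F : set (set Omega))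
  (Pf Qf : set (set Omega -> R)) (S : (set Omega -> R) -> set Omega).
Hypothesis HF : is_sigma_algebra F.
Hypothesis Hloc : pre_hahn_localizable F Pf Qf S.
Hypothesis Hdisj : forall Q Q', Qf Q -> Qf Q' -> Q <> Q' -> S Q `&` S Q' = set0.

Let H := hahn_extension F Qf S.

Lemma HH : is_sigma_algebra H.
Proof. exact: smallest_sigma_algebra. Qed.

Lemma FH A : F A -> H A.
Proof. by move=> FA; apply: sub_gen_smallest; left. Qed.

Lemma QfS Q : Qf Q -> F (S Q).
Proof. by case: Hloc => _ h _ _ _; apply: h. Qed.

Lemma HS A Q : H A -> Qf Q -> F (A `&` S Q).
Proof.
move=> HA QQ; move: Q QQ; move: A HA.
apply: (@smallest_sub _ _ _ [set A | forall Q, Qf Q -> F (A `&` S Q)]).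
  split.
  - by move=> Q _; rewrite set0I; exact: G0.
  - move=> A hA Q QQ; rewrite setTD.
    have -> : ~` A `&` S Q = S Q `\` (A `&` S Q).
      by apply/seteqP; split => x /=; [move=> [nA Sx]; split => // -[]|move=> [Sx h]; split => // Ax; apply: h].
    by apply: GD => //; [exact: QfS|exact: hA].
  - move=> B hB Q QQ; rewrite setI_bigcupl; apply: GUn => // i; exact: hB.
move=> A [FA|[E [hE ->]]] Q QQ.
  by apply: GI => //; exact: QfS.
have -> : (\bigcup_(Q' in Qf) E Q') `&` S Q = E Q.
  apply/seteqP; split => x.
    move=> [[Q' QQ' Ex] Sx]; have [<-//|ne] := pselect (Q' = Q).
    have := Hdisj QQ' QQ ne; have ESQ' := (hE Q' QQ').2 x Ex.
    by move=> h; have : (S Q' `&` S Q) x by []; rewrite h.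
  by move=> Ex; split; [exists Q|exact: (hE Q QQ).2].
by case: (hE Q QQ).
Qed.


Lemma m_mono (m : set Omega -> R) : is_signed_measure F m ->
  (forall X, F X -> 0 <= m X) -> forall Y Z, F Y -> F Z -> Y `<=` Z -> m Y <= m Z.
Proof.
move=> Hm m0 Y Z FY FZ YZ; rewrite (m_split HF Hm FZ FY) setIidr //.
by rewrite lerDl; apply: m0; apply: GD.
Qed.

Variables (mu : set Omega -> R) (Hmu : is_signed_measure F mu).
Variables (Pp Nn : set Omega).
Hypotheses (FPp : F Pp) (FNn : F Nn) (PNU : Pp `|` Nn = setT) (PNI : Pp `&` Nn = set0).
Hypothesis posP : forall D, F D -> D `<=` Pp -> 0 <= mu D.
Hypothesis negN : forall D, F D -> D `<=` Nn -> mu D <= 0.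

Let mp X := mu (X `&` Pp).
Let mn X := - mu (X `&` Nn).

Lemma mp_sm : is_signed_measure F mp.
Proof.
split; first by rewrite /mp set0I; case: Hmu.
move=> B FB tB; rewrite /mp setI_bigcupl; case: Hmu => _; apply.
  by move=> i; apply: GI.
by move=> i j _ _ [x [[Bi _] [Bj _]]]; apply: tB => //; exists x.
Qed.

Lemma mn_sm : is_signed_measure F mn.
Proof.
split; first by rewrite /mn set0I; case: Hmu => ->; rewrite oppr0.
move=> B FB tB; rewrite /mn setI_bigcupl.
under eq_fun do rewrite sumrN.
apply: cvgN; case: Hmu => _; apply.
  by move=> i; apply: GI.
by move=> i j _ _ [x [[Bi _] [Bj _]]]; apply: tB => //; exists x.
Qed.

Lemma mp_ge0 X : F X -> 0 <= mp X.
Proof. by move=> FX; apply: posP; [apply: GI|apply: subIsetr]. Qed.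

Lemma mn_ge0 X : F X -> 0 <= mn X.
Proof. by move=> FX; rewrite /mn oppr_ge0; apply: negN; [apply: GI|apply: subIsetr]. Qed.

Lemma DPp X : X `\` Pp = X `&` Nn.
Proof.
apply/seteqP; split => x /=.
  move=> [Xx nP]; split => //; have : setT x by [].
  by rewrite -PNU => -[].
move=> [Xx Nx]; split => // Px.
by have : (Pp `&` Nn) x by []; rewrite PNI.
Qed.

Lemma mu_split X : F X -> mu X = mp X - mn X.
Proof. by move=> FX; rewrite (m_split HF Hmu FX FPp) DPp /mn opprK. Qed.

Lemma tv_F X : F X -> tot_var F mu X = (mp X + mn X)%:E.
Proof.
move=> FX; rewrite (@TV_hahn R Omega F HF mu Hmu X (X `&` Pp) (X `&` Nn)) //.

- exact: GI.
- exact: GI.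
- by rewrite setIACA PNI setI0.
- by rewrite -setIUr PNU setIT.
- by move=> D FD DP; apply: posP => // x /DP [].
- by move=> D FD DN; apply: negN => // x /DN [].
Qed.

Lemma null_sub Z Y : F Z -> (tot_var F mu Z <= 0)%E -> F Y -> Y `<=` Z ->
  mp Y = 0 /\ mn Y = 0.
Proof.
move=> FZ; rewrite tv_F // lee_fin => h FY YZ.
have h1 := mp_ge0 FZ; have h2 := mn_ge0 FZ.
have h3 := mp_ge0 FY; have h4 := mn_ge0 FY.
have h5 := m_mono mp_sm mp_ge0 FY FZ YZ.
have h6 := m_mono mn_sm mn_ge0 FY FZ YZ.
split; lra.
Qed.


Variables (P0 nu : set Omega -> R) (c : nat -> R) (q : nat -> (set Omega -> R)).
Hypothesis HP0 : abs_cont F (tot_var F mu) P0.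
Hypothesis Hnu : abs_cont_r F P0 nu.
Hypothesis Hq : forall n, Qf (q n).
Hypothesis Hcnu : forall A, F A -> (fun n => \sum_(i < n) c i * q i A) @ \oo --> nu A.

Let Qm := Qmu F Qf S mu.

Lemma Qprob Q : Qf Q -> is_probability F Q.
Proof. by case: Hloc => h _ _ _ _; apply: h. Qed.

Lemma Qdelta Q Q' : Qf Q -> Qf Q' -> Q (S Q') = if pselect (Q = Q') then 1 else 0.
Proof. by case: Hloc => _ _ h _ _; apply: h. Qed.

Lemma Q_out Q Y : Qf Q -> F Y -> Y `<=` ~` S Q -> Q Y = 0.
Proof.
move=> QQ FY YS; have [Qsm Q0 QT] := Qprob QQ.
have FSQ := QfS QQ.
have e1 := m_split HF Qsm (GT HF) FSQ.
have e3 : (if pselect (Q = Q) then 1 else 0) = (1:R) by case: pselect.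
rewrite QT setTI setTD Qdelta // e3 in e1.
have e2 : Q (~` S Q) = 0 by lra.
have := m_mono Qsm Q0 FY (GC HF FSQ) YS; rewrite e2 => h.
by apply/eqP; rewrite eq_le h Q0.
Qed.

Lemma nu_zero Y : F Y -> (forall i, q i Y = 0) -> nu Y = 0.
Proof.
move=> FY h; have h1 := Hcnu FY.
have h2 : (fun n => \sum_(i < n) c i * q i Y) @ \oo --> (0:R).
  by apply: cvg_near_cst; apply: nearW => n; rewrite big1 // => i _; rewrite h mulr0.
exact: (cvg_unique _ h1 h2).
Qed.

Lemma tv_zero Y : F Y -> (forall i, q i Y = 0) -> (tot_var F mu Y <= 0)%E.
Proof. by move=> FY h; rewrite (HP0 FY) // Hnu // nu_zero. Qed.

Lemma Qm_range Q : Qm Q -> exists n, q n = Q.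
Proof.
move=> [QQ tvpos]; apply: contrapT => hn.
have h : (tot_var F mu (S Q) <= 0)%E.
  apply: tv_zero; first exact: QfS.
  move=> i; rewrite Qdelta //; case: pselect => // e.
  by exfalso; apply: hn; exists i.
by move: tvpos; rewrite ltNge h.
Qed.

Lemma notQm_null Q Y : Qf Q -> ~ Qm Q -> F Y -> Y `<=` S Q -> mp Y = 0 /\ mn Y = 0.
Proof.
move=> QQ nQ FY YS; apply: (@null_sub (S Q)) => //; first exact: QfS.
by rewrite leNgt; apply/negP => h; apply: nQ.
Qed.

Let U := \bigcup_n S (q n).

Lemma FU : F U.
Proof. by apply: GUn => // n; apply: QfS. Qed.

Lemma outU_null X : F X -> mp (X `\` U) = 0 /\ mn (X `\` U) = 0.
Proof.
move=> FX; have FXU : F (X `\` U) by apply: GD => //; exact: FU.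
apply: (@null_sub (X `\` U)) => //.
apply: tv_zero => // i; apply: Q_out => // x [_ nU] Sx; apply: nU; by exists i.
Qed.


Definition J0 : pred nat := fun n => `[< forall k, (k < n)%N -> q k <> q n >].

Lemma J0_first n : exists2 k, J0 k & q k = q n.
Proof.
have ex : exists k, `[< q k = q n >] by exists n; apply/asboolP.
case: (ex_minnP ex) => k /asboolP qk kmin.
exists k => //; apply/asboolP => j jk qj.
have := kmin j; rewrite qj qk => /(_ (asboolT erefl)).
by rewrite leqNgt jk.
Qed.

Lemma J0_neq i j : J0 i -> J0 j -> i <> j -> q i <> q j.
Proof.
move=> /asboolP hi /asboolP hj ij; case: (ltngtP i j) => [lt|lt|e] //.
- exact: hj.
- by move=> e; apply: (hi j lt); rewrite e.
Qed.

Lemma Qm_img : Qm `<=` q @` [set n | J0 n].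
Proof.
move=> Q /Qm_range [n <-]; have [k Jk e] := J0_first n.
by exists k.
Qed.

Lemma esum_Qm (g : (set Omega -> R) -> \bar R) : (forall Q, Qm Q -> (0 <= g Q)%E) ->
  esum Qm g = (\sum_(n <oo | J0 n) (if q n \in Qm then g (q n) else 0))%E.
Proof.
move=> g0.
have eQ : Qm = (q @` [set n | J0 n]) `&` Qm by rewrite setIidr //; exact: Qm_img.
rewrite {1}eQ esum_mkcondr esum_pred_image //.
- by move=> n _; case: ifP => // /set_mem; apply: g0.
- move=> i j /= hi hj e; apply: contrapT => ne.
  by apply: (J0_neq (set_mem hi) (set_mem hj) ne).
Qed.

Lemma series_EFin (a : nat -> R) l : (fun n => \sum_(i < n) a i) @ \oo --> l ->
  (\sum_(i <oo) (a i)%:E)%E = l%:E.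
Proof.
move=> h; apply: cvg_lim => //; apply/fine_cvgP; split.
  by apply: nearW => n; rewrite sumEFin.
apply: cvg_trans h; apply: near_eq_cvg; apply: nearW => n /=.
by rewrite sumEFin /= big_mkord.
Qed.


Section Em.
Variable m : set Omega -> R.
Hypothesis Hm : is_signed_measure F m.
Hypothesis m_ge0 : forall X, F X -> 0 <= m X.
Hypothesis m_nullQ : forall Q Y, Qf Q -> ~ Qm Q -> F Y -> Y `<=` S Q -> m Y = 0.
Hypothesis m_nullU : forall X, F X -> m (X `\` U) = 0.

Definition Em X := (\sum_(n <oo | J0 n) (m (X `&` S (q n)))%:E)%E.

Lemma Em_esum X : H X -> esum Qm (fun Q => (m (X `&` S Q))%:E) = Em X.
Proof.
move=> HX; rewrite esum_Qm; last by move=> Q [QQ _]; rewrite lee_fin; apply: m_ge0; exact: HS.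
apply: eq_eseriesr => n _; case: ifPn => // /negP nQ.
rewrite (@m_nullQ (q n)) //.
- by move=> h; apply: nQ; apply/mem_set.
- exact: HS.
Qed.

Lemma Em_F X : F X -> Em X = (m X)%:E.
Proof.
move=> FX.
pose D n := if J0 n then X `&` S (q n) else set0.
have FD n : F (D n) by rewrite /D; case: ifP => _; [apply: GI => //; exact: QfS|exact: G0].
have tD : trivIset setT D.
  move=> i j _ _; rewrite /D; case: ifPn => hi; case: ifPn => hj; rewrite ?setI0 ?set0I;
    try by case.
  move=> [x [[_ Si] [_ Sj]]]; apply: contrapT => ij.
  have := Hdisj (Hq i) (Hq j) (J0_neq hi hj ij).
  by move=> h; have : (S (q i) `&` S (q j)) x by []; rewrite h.
have hs := (Hm.2 D FD tD).
rewrite /Em eseries_mkcond (@eq_eseriesr _ _ (fun i => (m (D i))%:E)); last first.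
  by move=> i _; rewrite /D; case: ifP => //; rewrite (m0 Hm).
rewrite (series_EFin hs); congr (_%:E).
have -> : \bigcup_n D n = X `&` U.
  apply/seteqP; split => x.
    by move=> [n _]; rewrite /D; case: ifP => // _ [Xx Sx]; split => //; exists n.
  move=> [Xx [n _ Sx]]; have [k Jk e] := J0_first n.
  by exists k => //; rewrite /D Jk; split => //; rewrite e.
by rewrite (m_split HF Hm FX FU) m_nullU // addr0.
Qed.

Lemma Em_add (B : (set Omega)^nat) : (forall i, H (B i)) -> trivIset setT B ->
  Em (\bigcup_i B i) = (\sum_(i <oo) Em (B i))%E.
Proof.
move=> HB tB.
have e n : (m ((\bigcup_i B i) `&` S (q n)))%:E =
    (\sum_(i <oo) (m (B i `&` S (q n)))%:E)%E.
  rewrite setI_bigcupl; apply/esym/series_EFin; apply: Hm.2.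
    by move=> i; apply: HS.
  by move=> i j _ _ [x [[Bi _] [Bj _]]]; apply: tB => //; exists x.
rewrite /Em; transitivity (\sum_(n <oo | J0 n) \sum_(i <oo) (m (B i `&` S (q n)))%:E)%E.
  by apply: eq_eseriesr => n _; exact: e.
rewrite nneseries_interchange //.
by move=> i j; rewrite lee_fin; apply: m_ge0; apply: HS.
Qed.

Lemma Em_ge0 X : H X -> (0 <= Em X)%E.
Proof.
by move=> HX; apply: nneseries_ge0 => n _ _; rewrite lee_fin; apply: m_ge0; apply: HS.
Qed.

Lemma Em_le X : H X -> (Em X <= (m setT)%:E)%E.
Proof.
move=> HX; rewrite -(Em_F (GT HF)); apply: lee_nneseries.
  by move=> n _ _; rewrite lee_fin; apply: m_ge0; apply: HS.
move=> n _; rewrite lee_fin; apply: (m_mono Hm m_ge0).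
- exact: HS.
- by apply: HS => //; exact: FH (GT HF).
- by move=> x [_ Sx].
Qed.

Lemma Em_fin X : H X -> Em X \is a fin_num.
Proof.
move=> HX; rewrite ge0_fin_numE; last exact: Em_ge0.
exact: (le_lt_trans (Em_le HX) (ltry _)).
Qed.

End Em.

Let Ep := Em mp.
Let En := Em mn.

Lemma mp_nullQ Q Y : Qf Q -> ~ Qm Q -> F Y -> Y `<=` S Q -> mp Y = 0.
Proof. by move=> *; case: (@notQm_null Q Y). Qed.
Lemma mn_nullQ Q Y : Qf Q -> ~ Qm Q -> F Y -> Y `<=` S Q -> mn Y = 0.
Proof. by move=> *; case: (@notQm_null Q Y). Qed.
Lemma mp_nullU X : F X -> mp (X `\` U) = 0.
Proof. by move=> FX; case: (outU_null FX). Qed.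
Lemma mn_nullU X : F X -> mn (X `\` U) = 0.
Proof. by move=> FX; case: (outU_null FX). Qed.

Let muQ := fun A => family_sum Qm (fun Q => mu (A `&` S Q)).

Lemma keyQ A : H A -> abs_summable Qm (fun Q => mu (A `&` S Q)) /\
  muQ A = fine (Ep A) - fine (En A).
Proof.
move=> HA.
have e1 := Em_esum mp_ge0 mp_nullQ HA.
have e2 := Em_esum mn_ge0 mn_nullQ HA.
rewrite /muQ /Ep /En -e1 -e2; apply: FS_split.
- by move=> Q [QQ _]; apply: mp_ge0; apply: HS.
- by move=> Q [QQ _]; apply: mn_ge0; apply: HS.
- by move=> Q [QQ _]; apply: mu_split; apply: HS.
- by rewrite e1; exact: (Em_fin mp_sm mp_ge0 mp_nullU).
- by rewrite e2; exact: (Em_fin mn_sm mn_ge0 mn_nullU).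
Qed.

Lemma Ep_F X : F X -> Ep X = (mp X)%:E.
Proof. exact: (Em_F mp_sm mp_nullU). Qed.
Lemma En_F X : F X -> En X = (mn X)%:E.
Proof. exact: (Em_F mn_sm mn_nullU). Qed.

Lemma muQ_F A : F A -> muQ A = mu A.
Proof.
move=> FA; rewrite (keyQ (FH FA)).2 Ep_F // En_F //= mu_split //.
Qed.

Lemma Ep_fin X : H X -> Ep X \is a fin_num.
Proof. exact: (Em_fin mp_sm mp_ge0 mp_nullU). Qed.
Lemma En_fin X : H X -> En X \is a fin_num.
Proof. exact: (Em_fin mn_sm mn_ge0 mn_nullU). Qed.
Lemma Ep_ge0 X : H X -> (0 <= Ep X)%E.
Proof. exact: (Em_ge0 mp_ge0). Qed.
Lemma En_ge0 X : H X -> (0 <= En X)%E.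
Proof. exact: (Em_ge0 mn_ge0). Qed.

Lemma muQ_sm : is_signed_measure H muQ.
Proof.
split; first by rewrite muQ_F; [case: Hmu|exact: G0].
move=> B HB tB.
have HU : H (\bigcup_i B i) by apply: GUn => //; exact: HH.
rewrite (keyQ HU).2.
have -> : (fun n => \sum_(i < n) muQ (B i)) =
    (fun n => \sum_(i < n) fine (Ep (B i)) - \sum_(i < n) fine (En (B i))).
  by apply/funext => n; rewrite -sumrB; apply: eq_bigr => i _; rewrite (keyQ (HB i)).2.
apply: cvgB.
- apply: (@series_fine _ (fun i => Ep (B i))).
  + by move=> i; apply: Ep_ge0.
  + by move=> i; apply: Ep_fin.
  + by rewrite /Ep (Em_add mp_sm mp_ge0).
  + exact: Ep_fin.
- apply: (@series_fine _ (fun i => En (B i))).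
  + by move=> i; apply: En_ge0.
  + by move=> i; apply: En_fin.
  + by rewrite /En (Em_add mn_sm mn_ge0).
  + exact: En_fin.
Qed.

Lemma Ep_zero X : X `<=` Nn -> Ep X = 0.
Proof.
move=> XN; apply: eseries0 => n _ _; rewrite /mp.
suff -> : X `&` S (q n) `&` Pp = set0 by rewrite (m0 Hmu).
by apply/seteqP; split => x // [[Xx _] Px]; rewrite -PNI; split => //; apply: XN.
Qed.

Lemma En_zero X : X `<=` Pp -> En X = 0.
Proof.
move=> XP; apply: eseries0 => n _ _; rewrite /mn.
suff -> : X `&` S (q n) `&` Nn = set0 by rewrite (m0 Hmu) oppr0.
by apply/seteqP; split => x // [[Xx _] Nx]; rewrite -PNI; split => //; apply: XP.
Qed.

Lemma Ep_P X : Ep (X `&` Pp) = Ep X.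
Proof.
apply: eq_eseriesr => n _; rewrite /mp; congr ((mu _)%:E).
by apply/seteqP; split => x /=; tauto.
Qed.

Lemma En_N X : En (X `&` Nn) = En X.
Proof.
apply: eq_eseriesr => n _; rewrite /mn; congr ((- mu _)%:E).
by apply/seteqP; split => x /=; tauto.
Qed.

Lemma tv_muQ A : H A ->
  tot_var H muQ A = esum Qm (fun Q => tot_var F mu (A `&` S Q)).
Proof.
move=> HA.
have HAP : H (A `&` Pp) by apply: (GI HH HA (FH FPp)).
have HAN : H (A `&` Nn) by apply: (GI HH HA (FH FNn)).
rewrite (@TV_hahn R Omega H HH muQ muQ_sm A (A `&` Pp) (A `&` Nn)) //; last 4 first.
- by rewrite setIACA PNI setI0.
- by rewrite -setIUr PNU setIT.
- move=> D HD DP; rewrite (keyQ HD).2 En_zero; last by move=> x /DP [].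
  by rewrite subr0; apply: fine_ge0; apply: Ep_ge0.
- move=> D HD DN; rewrite (keyQ HD).2 Ep_zero; last by move=> x /DN [].
  by rewrite sub0r oppr_le0; apply: fine_ge0; apply: En_ge0.
rewrite (keyQ HAP).2 (keyQ HAN).2 Ep_P En_N (@Ep_zero (A `&` Nn)); last by move=> x [].
rewrite (@En_zero (A `&` Pp)); last by move=> x [].
rewrite (@eq_esum _ _ _ _ (fun Q => (mp (A `&` S Q))%:E + (mn (A `&` S Q))%:E)%E); last first.
  by move=> Q [QQ _]; rewrite tv_F //; apply: HS.
rewrite esumD; last 2 first.
- by move=> Q [QQ _]; rewrite lee_fin; apply: mp_ge0; apply: HS.
- by move=> Q [QQ _]; rewrite lee_fin; apply: mn_ge0; apply: HS.
rewrite (Em_esum mp_ge0 mp_nullQ HA) (Em_esum mn_ge0 mn_nullQ HA).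
have e1 := fineK (Ep_fin HA); have e2 := fineK (En_fin HA).
rewrite /Ep /En in e1 e2; rewrite -e1 -e2 /= -EFinD; congr (_%:E); lra.
Qed.

Lemma Qm_countable : countable Qm.
Proof.
apply: (card_le_trans (subset_card_le Qm_img)).
apply: (card_le_trans (card_image_le q _)).
exact: subset_card_le (@subsetT _ _).
Qed.

Lemma main_result :
  [/\ countable Qm,
      (forall A, H A -> abs_summable Qm (fun Q => mu (A `&` S Q))),
      is_signed_measure H muQ,
      (forall A, F A -> muQ A = mu A) &
      (forall A, H A -> (tot_var H muQ A =
                        esum Qm (fun Q => tot_var F mu (A `&` S Q)))%E)].
Proof.
split.
- exact: Qm_countable.
- by move=> A HA; case: (keyQ HA).
- exact: muQ_sm.
- exact: muQ_F.
- exact: tv_muQ.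
Qed.

End main.

Unset Implicit Arguments.

Theorem theorem4p3 (R : realType) (Omega : Type) (F : set (set Omega))
    (Pf Qf : set (set Omega -> R)) (S : (set Omega -> R) -> set Omega) :
  is_sigma_algebra F ->
  (forall P, Pf P -> is_probability F P) ->
  pre_hahn_localizable F Pf Qf S ->
  (forall Q Q', Qf Q -> Qf Q' -> Q <> Q' -> S Q `&` S Q' = set0) ->
  forall mu : set Omega -> R, ca F Pf mu ->
  let H := hahn_extension F Qf S in
  let Qm := Qmu F Qf S mu in
  let muQ := fun A => family_sum Qm (fun Q => mu (A `&` S Q)) in
  [/\ countable Qm,
      (forall A, H A -> abs_summable Qm (fun Q => mu (A `&` S Q))),
      is_signed_measure H muQ,
      (forall A, F A -> muQ A = mu A) &
      (forall A, H A -> (tot_var H muQ A =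
                        esum Qm (fun Q => tot_var F mu (A `&` S Q)))%E)].
Proof.
move=> HF HPf Hloc Hdisj mu [Hmu [P0 PfP0 HP0]] H Qm muQ.
have Hloc' := Hloc.
case: Hloc' => _ _ _ _ /(_ P0 PfP0) [nu [c [q [Hq Hc Hcs Hcnu]]] Hnu].
have [w _] : exists w : Omega, True.
  apply: contrapT => hne.
  have [[P00 _] _ PT] := HPf P0 PfP0.
  have e : [set: Omega] = set0.
    by apply/seteqP; split => x // _; apply: hne; exists x.
  rewrite e P00 in PT.
  by move/eqP: PT; rewrite eq_sym oner_eq0.
have [Pp [Nn [FPp FNn PNU PNI [posP negN]]]] := hahn_F w HF Hmu.
exact: (main_result HF Hloc Hdisj Hmu FPp FNn PNU PNI posP negN HP0 Hnu Hq Hcnu).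
Qed.
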